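(* For every game $G$, the comma category $(\mathbf{FinGame}_{emb}/G)_{\mathbf{Games}_{emb}}$ has the joint embedding property and the amalgamation property.
   Context: A game tree is $T\subseteq M^{<\omega}$ (some set $M$) closed under initial segments such that every $t\in T$ has an extension $t^\frown x\in T$; $|t|$ is the length, $t\restriction k$ the initial segment of length $k$. $\mathrm{Run}(T)=\{R\in M^\omega:R\restriction n\in T\ \forall n\}$. A game is $(T,A)$ with $A\subseteq\mathrm{Run}(T)$; finite if $\mathrm{Run}(T)$ is finite. A chronological map $f\colon T_1\to T_2$ satisfies $|f(t)|=|t|$, $f(t\restriction k)=f(t)\restriction k$, inducing $\bar f$ on runs via $\bar f(R)\restriction n=f(R\restriction n)$. A game embedding $(T_1,A_1)\to(T_2,A_2)$ is an injective chronological $f$ with $\bar f(R)\in A_2\iff R\in A_1$ for all runs $R$. $\mathbf{Games}_{emb}$ is the category of games and game embeddings, $\mathbf{FinGame}_{emb}$ its full subcategory of finite games. The comma category $(\mathbf{FinGame}_{emb}/G)_{\mathbf{Games}_{emb}}$ has as objects the game embeddings $x\colon C\to G$ with $C$ finite, and as morphisms from $x_C\colon C\to G$ to $x_D\colon D\to G$ the game embeddings $h\colon C\to D$ with $x_D\circ h=x_C$. Joint embedding property: any two objects admit morphisms into a common object. Amalgamation property: for morphisms $a\colon P\to Q$, $a'\colon P\to Q'$ there are morphisms $b\colon Q\to R$, $b'\colon Q'\to R$ with $b\circ a=b'\circ a'$. *)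

(* Defs.v *)
From mathcomp Require Import all_boot.
Set Implicit Arguments. Unset Strict Implicit. Unset Printing Implicit Defensive.

Definition restr (M : Type) (R : nat -> M) (n : nat) : seq M := mkseq R n.

Definition isRun (M : Type) (T : seq M -> Prop) (R : nat -> M) : Prop :=
  forall n, T (restr R n).

Record game : Type := Game {
  gM : Type;
  gT : seq gM -> Prop;
  gA : (nat -> gM) -> Prop;
  gT_prefix : forall t k, gT t -> gT (take k t);
  gT_ext : forall t, gT t -> exists x, gT (rcons t x);
  gA_run : forall R, gA R -> isRun gT R
}.

(* Run(T) is finite (runs identified up to pointwise equality). *)
Definition finite_game (G : game) : Prop :=
  exists l : seq (nat -> gM G),
    forall R, isRun (@gT G) R -> exists2 i, i < size l & forall n, R n = nth R l i n.

(* f : T1 -> T2 is chronological (f given as a function on all sequences,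
   only its behaviour on T1 matters) *)
Definition chronological (G1 G2 : game) (f : seq (gM G1) -> seq (gM G2)) : Prop :=
  forall t, gT t ->
    [/\ gT (f t), size (f t) = size t & forall k, f (take k t) = take k (f t)].

(* game embedding: injective chronological map with
   fbar(R) in A2 <-> R in A1, where fbar(R) |` n = f (R |` n) *)
Definition game_embedding (G1 G2 : game) (f : seq (gM G1) -> seq (gM G2)) : Prop :=
  [/\ chronological f,
      (forall s t, gT s -> gT t -> f s = f t -> s = t)
    & forall (R : nat -> gM G1) (R' : nat -> gM G2), isRun (@gT G1) R ->
        (forall n, f (restr R n) = restr R' n) -> (gA R' <-> gA R)].

Record comma_obj (G : game) : Type := CommaObj {
  co_game : game;
  co_fin : finite_game co_game;
  co_map : seq (gM co_game) -> seq (gM G);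
  co_emb : game_embedding co_map
}.

Definition comma_mor (G : game) (X Y : comma_obj G)
  (h : seq (gM (co_game X)) -> seq (gM (co_game Y))) : Prop :=
  game_embedding h /\ forall t, @gT (co_game X) t -> @co_map G Y (h t) = @co_map G X t.

Arguments comma_mor {G} X Y h.

Definition joint_embedding_property (G : game) : Prop :=
  forall X Y : comma_obj G, exists (Z : comma_obj G) hX hY,
    comma_mor X Z hX /\ comma_mor Y Z hY.

Definition amalgamation_property (G : game) : Prop :=
  forall (P Q Q' : comma_obj G) a a', comma_mor P Q a -> comma_mor P Q' a' ->
    exists (R : comma_obj G) b b',
      [/\ comma_mor Q R b, comma_mor Q' R b'
        & forall t, @gT (co_game P) t -> b (a t) = b' (a' t)].

(* Main.v *)
Require Import Defs.
From mathcomp Require Import all_boot.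
From Stdlib Require Import Classical ClassicalEpsilon FunctionalExtensionality.
Set Implicit Arguments. Unset Strict Implicit.

Definition img (G : game) (X : comma_obj G) (t : seq (gM G)) : Prop :=
  exists s, @gT (co_game X) s /\ @co_map G X s = t.

Lemma take_restr (M : Type) (R : nat -> M) k n : k <= n -> take k (restr R n) = restr R k.
Proof. by move=> H; rewrite /restr /mkseq -map_take take_iota (minn_idPl H). Qed.

Lemma size_restr (M : Type) (R : nat -> M) n : size (restr R n) = n.
Proof. by rewrite /restr size_mkseq. Qed.

Lemma img_prefix (G : game) (X : comma_obj G) t k : img X t -> img X (take k t).
Proof.
move=> [s [Hs <-]]; exists (take k s); split; first exact: gT_prefix.
have [Hch _ _] := co_emb X. by have [_ _ ->] := Hch _ Hs.
Qed.

Definition UT (G : game) (X Y : comma_obj G) (t : seq (gM G)) : Prop := img X t \/ img Y t.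
Definition UA (G : game) (X Y : comma_obj G) (R : nat -> gM G) : Prop :=
  gA R /\ isRun (UT X Y) R.

Lemma UT_prefix (G : game) (X Y : comma_obj G) t k : UT X Y t -> UT X Y (take k t).
Proof. by case=> H; [left|right]; apply: img_prefix. Qed.

Lemma img_ext (G : game) (X : comma_obj G) t : img X t -> exists z, img X (rcons t z).
Proof.
move=> [s [Hs <-]].
have [y Hy] := gT_ext Hs.
have [Hsz _ _] := co_emb X.
have [_ Hsz' Htk'] := Hsz _ Hy.
have [_ Hsz0 _] := Hsz _ Hs.
set u := @co_map G X (rcons s y) in Hsz' Htk'.
have Ht : take (size s) u = @co_map G X s.
  by rewrite -Htk' -cats1 take_size_cat.
have Hd : size (drop (size s) u) = 1.
  by rewrite size_drop Hsz' size_rcons subSnn.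
case E: (drop (size s) u) Hd => [|z [|? ?]] // _.
exists z; exists (rcons s y); split => //.
by rewrite -/u -(cat_take_drop (size s) u) Ht E cats1.
Qed.

Lemma UT_ext (G : game) (X Y : comma_obj G) t : UT X Y t -> exists z, UT X Y (rcons t z).
Proof.
case=> H; [have [z Hz] := img_ext H | have [z Hz] := img_ext H]; exists z; by [left|right].
Qed.

Lemma UA_run (G : game) (X Y : comma_obj G) R : UA X Y R -> isRun (UT X Y) R.
Proof. by case. Qed.

Definition Ugame (G : game) (X Y : comma_obj G) : game :=
  @Game (gM G) (UT X Y) (UA X Y) (@UT_prefix G X Y) (@UT_ext G X Y) (@UA_run G X Y).

Lemma img_run (G : game) (X : comma_obj G) (R : nat -> gM G) :
  (forall n, img X (restr R n)) ->
  exists RC, isRun (@gT (co_game X)) RC /\ forall n, @co_map G X (restr RC n) = restr R n.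
Proof.
move=> H.
pose sf n := proj1_sig (constructive_indefinite_description _ (H n)).
have Hsf n : @gT (co_game X) (sf n) /\ @co_map G X (sf n) = restr R n.
  exact: (proj2_sig (constructive_indefinite_description _ (H n))).
have [Hch Hinj _] := co_emb X.
have Hsize n : size (sf n) = n.
  have [Hs He] := Hsf n. have [_ Hz _] := Hch _ Hs. by rewrite -Hz He size_restr.
have Htake k n : k <= n -> take k (sf n) = sf k.
  move=> Hkn; have [Hs He] := Hsf n; have [Hs' He'] := Hsf k.
  apply: Hinj => //; first exact: gT_prefix.
  have [_ _ ->] := Hch _ Hs. by rewrite He He' take_restr.
case E1: (sf 1) (Hsize 1) => [|d [|? ?]] // _.
pose RC n := nth d (sf n.+1) n.
have HRC n : restr RC n = sf n.
  apply: (@eq_from_nth _ d); first by rewrite size_restr Hsize.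
  move=> i; rewrite size_restr => Hi.
  by rewrite /restr nth_mkseq // /RC -(Htake i.+1 n Hi) nth_take.
exists RC; split => n; rewrite HRC; first by case: (Hsf n).
by case: (Hsf n).
Qed.

Lemma U_fin (G : game) (X Y : comma_obj G) : finite_game (Ugame X Y).
Proof.
case: (classic (exists d : gM G, True)) => [[dG _]|nE]; last first.
  by exists nil => R _; exfalso; apply: nE; exists (R 0).
have [lX HX] := co_fin X; have [lY HY] := co_fin Y.
pose xbar (Q : nat -> gM (co_game X)) n := nth dG (@co_map G X (restr Q n.+1)) n.
pose ybar (Q : nat -> gM (co_game Y)) n := nth dG (@co_map G Y (restr Q n.+1)) n.
exists (map xbar lX ++ map ybar lY) => R HR.
case: (classic (forall n, img X (restr R n))) => [HXall|HnX].
  have [RC [HRC HRC2]] := img_run HXall.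
  have [i Hi HRi] := HX RC HRC.
  exists i; first by rewrite size_cat size_map ltn_addr.
  move=> n; rewrite nth_cat size_map Hi.
  rewrite (set_nth_default (xbar RC)) ?size_map // (nth_map RC) //.
  rewrite /xbar.
  have -> : restr (nth RC lX i) n.+1 = restr RC n.+1 by apply: eq_mkseq => k; rewrite HRi.
  by rewrite HRC2 /restr nth_mkseq.
have [n0 Hn0] := not_all_ex_not _ _ HnX.
have HYall : forall n, img Y (restr R n).
  move=> n; case: (HR (n + n0)) => H.
    exfalso; apply: Hn0; rewrite -(@take_restr _ R n0 (n + n0)) ?leq_addl //.
    exact: img_prefix.
  by rewrite -(@take_restr _ R n (n + n0)) ?leq_addr //; apply: img_prefix.
have [RC [HRC HRC2]] := img_run HYall.
have [i Hi HRi] := HY RC HRC.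
exists (size lX + i); first by rewrite size_cat !size_map ltn_add2l.
move=> n; rewrite nth_cat size_map ltnNge leq_addr /= addKn.
rewrite (set_nth_default (ybar RC)) ?size_map // (nth_map RC) //.
rewrite /ybar.
have -> : restr (nth RC lY i) n.+1 = restr RC n.+1 by apply: eq_mkseq => k; rewrite HRi.
by rewrite HRC2 /restr nth_mkseq.
Qed.

Lemma U_emb (G : game) (X Y : comma_obj G) :
  game_embedding (G1 := Ugame X Y) (G2 := G) id.
Proof.
split.
- move=> t Ht; split => //.
  case: Ht => -[s [Hs <-]].
    by have [Hch _ _] := co_emb X; have [] := Hch _ Hs.
  by have [Hch _ _] := co_emb Y; have [] := Hch _ Hs.
- by [].
- move=> R R' HR Heq.
  have -> : R' = R.
    apply: functional_extensionality => n.
    have := Heq n.+1; rewrite /= => E.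
    have := f_equal (fun s => nth (R n) s n) E.
    by rewrite /restr !nth_mkseq.
  simpl; split; [move=> H; split => // | by case].
Qed.

Definition Uobj (G : game) (X Y : comma_obj G) : comma_obj G :=
  @CommaObj G (Ugame X Y) (U_fin X Y) id (U_emb X Y).

Lemma mor_l (G : game) (X Y : comma_obj G) : comma_mor X (Uobj X Y) (@co_map G X).
Proof.
split => //.
have [Hch Hinj Hacc] := co_emb X.
split => //.
- move=> t Ht; have [H1 H2 H3] := Hch t Ht; split => //.
  by left; exists t.
- move=> R R' HR Heq; rewrite -(Hacc R R' HR Heq); simpl; split; first by case.
  move=> H; split => // n; left; exists (restr R n); split => //.
Qed.

Lemma mor_r (G : game) (X Y : comma_obj G) : comma_mor Y (Uobj X Y) (@co_map G Y).
Proof.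
split => //.
have [Hch Hinj Hacc] := co_emb Y.
split => //.
- move=> t Ht; have [H1 H2 H3] := Hch t Ht; split => //.
  by right; exists t.
- move=> R R' HR Heq; rewrite -(Hacc R R' HR Heq); simpl; split; first by case.
  move=> H; split => // n; right; exists (restr R n); split => //.
Qed.

Theorem mainTheorem14 (G : game) :
  joint_embedding_property G /\ amalgamation_property G.
Proof.
split.
- move=> X Y; exists (Uobj X Y), (@co_map G X), (@co_map G Y).
  split; [exact: mor_l | exact: mor_r].
- move=> P Q Q' a a' Ha Ha'.
  exists (Uobj Q Q'), (@co_map G Q), (@co_map G Q').
  split; [exact: mor_l | exact: mor_r |].
  by move=> t Ht; rewrite (proj2 Ha t Ht) (proj2 Ha' t Ht).
Qed.
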